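(* Let $\mathcal{S}\subset\mathbb{R}^n$ be compact convex with $\|x\|\le D$ for all $x\in\mathcal{S}$, and let $f_t(\theta)=\frac12\|\theta-y_t\|^2$ with $y_t\in\mathcal{S}$, $t=1,\dots,T$. Let $\theta_1\in\mathcal{S}$ and define, for $\gamma\in(0,1)$, $$\theta_{t+1}=\frac{\gamma-\gamma^t}{1-\gamma^t}\theta_t+\frac{1-\gamma}{1-\gamma^t}y_t=\theta_t-\frac{1-\gamma}{1-\gamma^t}\nabla f_t(\theta_t).$$ Let $\theta_t^*=\operatorname{argmin}_{\theta\in\mathcal{S}}f_t(\theta)\,(=y_t)$ and $V^*=\sum_{t=2}^T\|\theta_t^*-\theta_{t-1}^*\|$. If $1-\gamma=1/T^\beta$ with $\beta\in(0,1)$, then $$\sum_{t=1}^T\big(f_t(\theta_t)-f_t(\theta_t^* )\big)\le 2DT^\beta\big(\|\theta_1-\theta_1^*\|+V^*\big).$$ *)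

(* Defs.v *)
From HB Require Import structures.
From mathcomp Require Import all_boot all_order all_algebra.
From mathcomp Require Import all_classical all_reals all_analysis.
Set Implicit Arguments. Unset Strict Implicit. Unset Printing Implicit Defensive.
Import Order.TTheory GRing.Theory Num.Theory.
Import numFieldNormedType.Exports.
Local Open Scope ring_scope.

Definition edot (R : realType) (n : nat) (x y : 'rV[R]_n) : R :=
  \sum_(i < n) x ord0 i * y ord0 i.

Definition enorm (R : realType) (n : nat) (x : 'rV[R]_n) : R :=
  Num.sqrt (edot x x).

Definition sqloss (R : realType) (n : nat) (y theta : 'rV[R]_n) : R :=
  2^-1 * enorm (theta - y) ^+ 2.

(* Main.v *)
Require Import Defs.
From HB Require Import structures.
From mathcomp Require Import all_boot all_order all_algebra.
From mathcomp Require Import all_classical all_reals all_analysis.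
From mathcomp Require Import ring lra.
Import Order.TTheory GRing.Theory Num.Theory.
Import numFieldNormedType.Exports.
Local Open Scope classical_set_scope.
Local Open Scope ring_scope.

Lemma sq_exp (R : realType) (a b u v : R) : (b * u - a * v) ^+ 2 = b ^+ 2 * (u * u) - 2 * a * b * (u * v) + a ^+ 2 * (v * v).
Proof. ring. Qed.


Lemma edot_ge0 {R : realType} {n : nat} (x : 'rV[R]_n) : 0 <= edot x x.
Proof. by apply: sumr_ge0 => i _; rewrite -expr2 sqr_ge0. Qed.

Lemma enorm_ge0 {R : realType} {n : nat} (x : 'rV[R]_n) : 0 <= enorm x.
Proof. exact: sqrtr_ge0. Qed.

Lemma enorm_sq {R : realType} {n : nat} (x : 'rV[R]_n) : enorm x ^+ 2 = edot x x.
Proof. by rewrite /enorm sqr_sqrtr // edot_ge0. Qed.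

Lemma edot0 {R : realType} {n : nat} (x : 'rV[R]_n) : edot x x = 0 -> x = 0.
Proof.
move=> h; apply/matrixP => i j; rewrite !mxE.
have hp : forall k : 'I_n, true -> 0 <= x ord0 k * x ord0 k.
  by move=> k _; rewrite -expr2 sqr_ge0.
have := psumr_eq0P hp h (i:=j) isT.
rewrite (ord1 i) => /eqP; rewrite mulf_eq0 orbb => /eqP //.
Qed.

Lemma edotC {R : realType} {n : nat} (x : 'rV[R]_n) (y : 'rV[R]_n) : edot x y = edot y x.
Proof. by apply: eq_bigr => i _; rewrite mulrC. Qed.

Lemma CS {R : realType} {n : nat} (x : 'rV[R]_n) (y : 'rV[R]_n) : edot x y <= enorm x * enorm y.
Proof.
set a := enorm x; set b := enorm y.
have ha : 0 <= a := enorm_ge0 x. have hb : 0 <= b := enorm_ge0 y.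
have [a0|apos] := eqVneq a 0.
  have : edot x x = 0 by rewrite -enorm_sq -/a a0 expr0n.
  move/edot0 => ->; rewrite /edot big1 ?a0 ?mul0r // => i _; by rewrite mxE mul0r.
have [b0|bpos] := eqVneq b 0.
  have : edot y y = 0 by rewrite -enorm_sq -/b b0 expr0n.
  move/edot0 => ->; rewrite /edot big1 ?b0 ?mulr0 // => i _; by rewrite mxE mulr0.
have h : 0 <= \sum_(i < n) (b * x ord0 i - a * y ord0 i) ^+ 2.
  by apply: sumr_ge0 => i _; rewrite sqr_ge0.
have e : \sum_(i < n) (b * x ord0 i - a * y ord0 i) ^+ 2 =
   b ^+ 2 * edot x x - 2 * a * b * edot x y + a ^+ 2 * edot y y.
  rewrite /edot !mulr_sumr -sumrB -big_split /=.
  apply: eq_bigr => i _; exact: sq_exp.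
rewrite e -!enorm_sq -/a -/b in h.
have abpos : 0 < a * b by rewrite mulr_gt0 // lt0r ?apos ?bpos.
have : 0 <= (a * b) * (2 * (a * b - edot x y)) by nra.
rewrite pmulr_rge0 //; lra.
Qed.

Lemma edotDl {R : realType} {n : nat} (x : 'rV[R]_n) (y : 'rV[R]_n) (z : 'rV[R]_n) : edot (x + y) z = edot x z + edot y z.
Proof. rewrite /edot -big_split /=; apply: eq_bigr => i _; by rewrite !mxE mulrDl. Qed.
Lemma edotZl {R : realType} {n : nat} (x : 'rV[R]_n) (z : 'rV[R]_n) (c : R) : edot (c *: x) z = c * edot x z.
Proof. rewrite /edot mulr_sumr; apply: eq_bigr => i _; by rewrite !mxE mulrA. Qed.

Lemma enorm_triangle {R : realType} {n : nat} (x : 'rV[R]_n) (y : 'rV[R]_n) : enorm (x + y) <= enorm x + enorm y.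
Proof.
rewrite /enorm -[X in _ <= X]ger0_norm; last by rewrite addr_ge0 ?sqrtr_ge0.
rewrite -sqrtr_sqr ler_sqrt ?sqr_ge0 //.
rewrite edotDl !(edotC _ (x + y)) !edotDl.
have := CS x y; rewrite -!/(enorm _).
have := sqr_sqrtr (edot_ge0 x); have := sqr_sqrtr (edot_ge0 y).
rewrite -!/(enorm _) (edotC y x) => h1 h2 h3. nra.
Qed.

Lemma enormZ {R : realType} {n : nat} (x : 'rV[R]_n) (c : R) : enorm (c *: x) = `|c| * enorm x.
Proof.
rewrite /enorm edotZl edotC edotZl mulrA sqrtrM; last by rewrite -expr2 sqr_ge0.
by rewrite -expr2 sqrtr_sqr.
Qed.

Lemma enormN {R : realType} {n : nat} (x : 'rV[R]_n) : enorm (- x) = enorm x.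
Proof. by rewrite -scaleN1r enormZ normrN normr1 mul1r. Qed.

Lemma enorm0 {R : realType} {n : nat} : enorm (0 : 'rV[R]_n) = 0.
Proof. by rewrite -(scale0r (0 : 'rV[R]_n)) enormZ normr0 mul0r. Qed.

Lemma enorm_eq0 {R : realType} {n : nat} (x : 'rV[R]_n) : enorm x = 0 -> x = 0.
Proof. by move=> h; apply: edot0; rewrite -enorm_sq h expr0n. Qed.


Lemma coef {R : realType} (g : R) (t : nat) : 0 < g < 1 -> (1 <= t)%N ->
  [/\ 0 <= (g - g ^+ t) / (1 - g ^+ t), (g - g ^+ t) / (1 - g ^+ t) <= g,
      0 <= (1 - g) / (1 - g ^+ t) &
      (g - g ^+ t) / (1 - g ^+ t) + (1 - g) / (1 - g ^+ t) = 1].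
Proof.
move=> /andP[g0 g1] t1.
have gt1 : g ^+ t < 1 by rewrite exprn_ilt1 ?ltW // -lt0n.
have gt0 : 0 <= g ^+ t by rewrite exprn_ge0 // ltW.
have gtg : g ^+ t <= g.
  case: t t1 {gt1 gt0} => // t _; rewrite exprS.
  have := exprn_ile1 t (ltW g0) (ltW g1); have := exprn_ge0 t (ltW g0); nra.
have den : 0 < 1 - g ^+ t by rewrite subr_gt0.
split.
- by rewrite divr_ge0 // ?subr_ge0 // ltW.
- rewrite ler_pdivrMr //; nra.
- by rewrite divr_ge0 // ?subr_ge0 // ltW.
- rewrite -mulrDl; have -> : g - g ^+ t + (1 - g) = 1 - g ^+ t by ring.
  by rewrite divff // gt_eqF.
Qed.

Lemma reassoc {R : realType} (x y z w : R) : x * z * (y * w) = x * y * (w * z).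
Proof. ring. Qed.

Theorem theorem3p2 (R : realType) (n : nat) (S : set 'rV[R]_n) (D : R)
  (T : nat) (y : nat -> 'rV[R]_n) (theta thetastar : nat -> 'rV[R]_n)
  (gamma beta : R) :
  compact S ->
  convex_set (S : set (convex_lmodType 'rV[R]_n)) ->
  (forall x, S x -> enorm x <= D) ->
  (forall t, (1 <= t <= T)%N -> S (y t)) ->
  S (theta 1%N) ->
  0 < gamma < 1 ->
  (forall t, (1 <= t <= T)%N ->
     theta t.+1 = ((gamma - gamma ^+ t) / (1 - gamma ^+ t)) *: theta t
                  + ((1 - gamma) / (1 - gamma ^+ t)) *: y t) ->
  (forall t, (1 <= t <= T)%N ->
     S (thetastar t) /\
     forall th, S th -> sqloss (y t) (thetastar t) <= sqloss (y t) th) ->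
  0 < beta < 1 ->
  1 - gamma = (T%:R) `^ (- beta) ->
  \sum_(1 <= t < T.+1) (sqloss (y t) (theta t) - sqloss (y t) (thetastar t))
    <= 2 * D * (T%:R) `^ beta *
       (enorm (theta 1%N - thetastar 1%N)
        + \sum_(2 <= t < T.+1) enorm (thetastar t - thetastar t.-1)).
Proof.
move=> _ _ hD hyS hth1 hg01 hrec hstar /andP[b0 b1] hg.
have /andP[g0 g1] := hg01.
have ystar : forall t, (1 <= t <= T)%N -> thetastar t = y t.
  move=> t ht; have [_ hmin] := hstar t ht.
  have := hmin _ (hyS t ht); rewrite /sqloss subrr enorm0 expr0n mulr0 => h.
  have h2 : enorm (thetastar t - y t) ^+ 2 <= 0 by lra.
  have h3 : enorm (thetastar t - y t) ^+ 2 = 0.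
    by apply/eqP; rewrite eq_le h2 sqr_ge0.
  by apply/eqP; rewrite -subr_eq0; apply/eqP/enorm_eq0; move/eqP: h3; rewrite expf_eq0 /= => /eqP.
case: T hyS hrec hstar hg ystar => [|T] hyS hrec hstar hg ystar.
  by move: hg; rewrite powR0 ?oppr_eq0 ?gt_eqF //; lra.
have D0 : 0 <= D by apply: le_trans (hD _ hth1); apply: enorm_ge0.
have thn : forall t, (1 <= t <= T.+1)%N -> enorm (theta t) <= D.
  elim => [//|t IH] /andP[_ ht].
  case: t IH ht => [_ _|t IH ht]; first exact: hD.
  have ht' : (1 <= t.+1 <= T.+1)%N by rewrite /= ltnW.
  have [c0 _ c2 c3] := @coef _ gamma t.+1 hg01 isT.
  rewrite hrec //; apply: le_trans (enorm_triangle _ _) _.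
  rewrite !enormZ !ger0_norm //.
  have h1 := IH ht'. have h2 := hD _ (hyS _ ht').
  have : (gamma - gamma ^+ t.+1) / (1 - gamma ^+ t.+1) * enorm (theta t.+1) +
    (1 - gamma) / (1 - gamma ^+ t.+1) * enorm (y t.+1) <=
    (gamma - gamma ^+ t.+1) / (1 - gamma ^+ t.+1) * D + (1 - gamma) / (1 - gamma ^+ t.+1) * D.
    by rewrite lerD // ler_wpM2l.
  by rewrite -mulrDl c3 mul1r.
set e := fun t => enorm (theta t - y t).
set d := fun t => enorm (y t - y t.-1).
have e0 : forall t, 0 <= e t by move=> t; apply: enorm_ge0.
have step : forall t, (1 <= t)%N -> (t.+1 <= T.+1)%N -> e t.+1 <= gamma * e t + d t.+1.
  move=> t t1 tT.
  have ht : (1 <= t <= T.+1)%N by rewrite t1 ltnW.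
  have [c0 c1 c2 c3] := @coef _ gamma t hg01 t1.
  rewrite /e /d hrec //.
  have -> : (1 - gamma) / (1 - gamma ^+ t) = 1 - (gamma - gamma ^+ t) / (1 - gamma ^+ t) by lra.
  set A := (gamma - gamma ^+ t) / (1 - gamma ^+ t).
  have -> : A *: theta t + (1 - A) *: y t - y t.+1 = A *: (theta t - y t) + - (y t.+1 - y t).
    by rewrite scalerBl scale1r scalerBr opprB; abstract (rewrite !addrA; congr (_ + _); rewrite addrAC; congr (_ + _); rewrite addrC).
  apply: le_trans (enorm_triangle _ _) _.
  rewrite enormZ enormN ger0_norm // lerD2r ler_wpM2r //; exact: enorm_ge0.
have LHS : \sum_(1 <= t < T.+2) (sqloss (y t) (theta t) - sqloss (y t) (thetastar t))
   = \sum_(1 <= t < T.+2) 2^-1 * e t ^+ 2.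
  apply: eq_big_nat => t ht; rewrite ystar // /sqloss subrr enorm0 expr0n mulr0 subr0.
  by rewrite /e -enormN opprB.
have RHS : \sum_(2 <= t < T.+2) enorm (thetastar t - thetastar t.-1) = \sum_(1 <= t < T.+1) d t.+1.
  rewrite big_add1 /=; apply: eq_big_nat => t /andP[t1 tT].
  by rewrite !ystar //= ?t1 ?tT ?(ltnW tT) // ltnW.
rewrite LHS RHS ystar //.
set E := \sum_(1 <= t < T.+2) e t.
set V := \sum_(1 <= t < T.+1) d t.+1.
have B1 : \sum_(1 <= t < T.+2) 2^-1 * e t ^+ 2 <= D * E.
  rewrite /E mulr_sumr; apply: ler_sum_nat => t /andP[t1 tT].
  have ht : (1 <= t <= T.+1)%N by rewrite t1 -ltnS.
  have : e t <= D + D.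
    apply: le_trans (enorm_triangle _ _) _; rewrite enormN lerD //; first exact: thn.
    exact: hD (hyS _ ht).
  have := e0 t; nra.
have B2 : E <= e 1%N + gamma * E + V.
  have E1 : E = e 1%N + \sum_(1 <= t < T.+1) e t.+1 by rewrite /E big_nat_recl.
  have E2 : E = \sum_(1 <= t < T.+1) e t + e T.+1 by rewrite /E big_nat_recr.
  have S1 : \sum_(1 <= t < T.+1) e t.+1 <= gamma * \sum_(1 <= t < T.+1) e t + V.
    rewrite /V mulr_sumr -big_split /=; apply: ler_sum_nat => t /andP[t1 tT].
    exact: step.
  have := e0 T.+1; nra.
set P := (T.+1)%:R `^ beta.
have P0 : 0 < P by rewrite powR_gt0.
have hP : (1 - gamma) * P = 1 by rewrite hg powRN mulVf // gt_eqF.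
have K0 : 0 <= e 1%N + V by rewrite addr_ge0 //; apply: sumr_ge0 => t _; exact: enorm_ge0.
have B3 : E * (1 - gamma) <= e 1%N + V by lra.
apply: le_trans B1 _.
have -> : D * E = D * P * (E * (1 - gamma)).
  by rewrite reassoc hP mulr1.
have DP : 0 <= D * P by rewrite mulr_ge0 // ltW.
apply: le_trans (ler_wpM2l DP B3) _.
have : 0 <= D * P * (e 1%N + V) by rewrite mulr_ge0.
rewrite /e; lra.
Qed.
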